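(* Fix $a>0$, $b>0$, $c>0$, $\theta>0$ such that $\zeta:=\frac{b^2-a(c-\theta)}{a^2}<0$, and let $\kappa=b/a$, $s=\sqrt{-\zeta}$, $z=\frac{c-\theta}{b}$, $p=\frac{b^2}{a(c-\theta)}$. If $a\le\frac{2b^2}{c-\theta}$, the distribution assigning probability $\tfrac12$ to each of $\kappa-s$ and $\kappa+s$ is a distribution on $[0,\infty)$; if $a\ge\frac{2b^2}{c-\theta}$, then $p\in(0,1)$ and the distribution assigning probability $1-p$ to $0$ and probability $p$ to $z$ is a distribution on $[0,\infty)$. In each case the distribution has mean $\kappa$ and variance $-\zeta$, and the profile in which both players use it is a mixed Nash equilibrium of the unrestricted contest (efforts $x,y\ge0$, payoffs $P(x,y)-\theta x$ and $1-P(x,y)-\theta y$ with $P(x,y)=\tfrac12+(x-y)(c-b(x+y)+axy)$, no truncation). At $a=\frac{2b^2}{c-\theta}$ the two distributions coincide. *)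

(* Defs.v *)
From HB Require Import structures.
From mathcomp Require Import all_boot all_order all_algebra.
From mathcomp Require Import reals.
Set Implicit Arguments. Unset Strict Implicit. Unset Printing Implicit Defensive.
Import Order.TTheory GRing.Theory Num.Theory.
Local Open Scope ring_scope.

Section Contest.
Variable R : realType.

(* A finitely supported distribution on R: list of (probability, point) pairs. *)
Definition fdist := seq (R * R).

Definition is_dist_nonneg (d : fdist) : Prop :=
  (forall u, u \in d -> 0 <= u.1 /\ 0 <= u.2) /\ \sum_(u <- d) u.1 = 1.

Definition expect (d : fdist) (f : R -> R) : R := \sum_(u <- d) u.1 * f u.2.
Definition mean (d : fdist) : R := expect d id.
Definition variance (d : fdist) : R := expect d (fun x => (x - mean d) ^+ 2).

Definition same_dist (d1 d2 : fdist) : Prop := forall f, expect d1 f = expect d2 f.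

Definition Pcsf (a b c x y : R) : R := 1/2 + (x - y) * (c - b * (x + y) + a * x * y).

Definition payoff1 (a b c theta : R) (x y : R) := Pcsf a b c x y - theta * x.
Definition payoff2 (a b c theta : R) (x y : R) := 1 - Pcsf a b c x y - theta * y.

Definition Epayoff1 a b c theta (d1 d2 : fdist) : R :=
  \sum_(u <- d1) \sum_(v <- d2) u.1 * v.1 * payoff1 a b c theta u.2 v.2.
Definition Epayoff2 a b c theta (d1 d2 : fdist) : R :=
  \sum_(u <- d1) \sum_(v <- d2) u.1 * v.1 * payoff2 a b c theta u.2 v.2.

Definition mixed_NE a b c theta (d1 d2 : fdist) : Prop :=
  is_dist_nonneg d1 /\ is_dist_nonneg d2 /\
  (forall d, is_dist_nonneg d -> Epayoff1 a b c theta d d2 <= Epayoff1 a b c theta d1 d2) /\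
  (forall d, is_dist_nonneg d -> Epayoff2 a b c theta d1 d <= Epayoff2 a b c theta d1 d2).

Definition zeta (a b c theta : R) : R := (b ^+ 2 - a * (c - theta)) / a ^+ 2.
Definition kappa (a b : R) : R := b / a.
Definition sdev (a b c theta : R) : R := Num.sqrt (- zeta a b c theta).
Definition zpt (b c theta : R) : R := (c - theta) / b.
Definition pw (a b c theta : R) : R := b ^+ 2 / (a * (c - theta)).

Definition D_sym (a b c theta : R) : fdist :=
  [:: (1/2, kappa a b - sdev a b c theta); (1/2, kappa a b + sdev a b c theta)].
Definition D_atom (a b c theta : R) : fdist :=
  [:: (1 - pw a b c theta, 0); (pw a b c theta, zpt b c theta)].

End Contest.

(* Main.v *)
Require Import Defs.
From HB Require Import structures.
From mathcomp Require Import all_boot all_order all_algebra.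
From mathcomp Require Import reals.
From mathcomp Require Import ring lra.
Import Order.TTheory GRing.Theory Num.Theory.
Local Open Scope ring_scope.

Lemma sum_quad (R : realType) (d : seq (R * R)) (f : R -> R) (A B C : R) :
  (forall y, f y = A + B * y + C * y ^+ 2) ->
  \sum_(u <- d) u.1 * f u.2 =
  A * \sum_(u <- d) u.1 + B * \sum_(u <- d) u.1 * u.2
  + C * \sum_(u <- d) u.1 * u.2 ^+ 2.
Proof.
move=> hf; elim: d => [|u d IH]; first by rewrite !big_nil; ring.
rewrite !big_cons IH hf; ring.
Qed.

Section G.
Variables (R : realType) (a b c theta : R).
Hypothesis a0 : a != 0.

Definition good (d : seq (R * R)) :=
  \sum_(u <- d) u.1 = 1 /\ \sum_(u <- d) u.1 * u.2 = b / a /\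
  \sum_(u <- d) u.1 * u.2 ^+ 2 = (c - theta) / a.

Lemma E1_const d x : good d ->
  \sum_(v <- d) v.1 * payoff1 a b c theta x v.2 = 1/2 - b * theta / a.
Proof.
move=> [h0 [h1 h2]].
rewrite (@sum_quad _ _ _ (1/2 - theta * x + x * c - b * x ^+ 2) (a * x ^+ 2 - c)
  (b - a * x)); last by move=> y; rewrite /payoff1 /Pcsf; ring.
rewrite h0 h1 h2; field; exact: a0.
Qed.

Lemma Ep1 d d2 : \sum_(u <- d) u.1 = 1 -> good d2 ->
  Epayoff1 a b c theta d d2 = 1/2 - b * theta / a.
Proof.
move=> h0 g; rewrite /Epayoff1.
transitivity (\sum_(u <- d) u.1 * (1/2 - b * theta / a)); last first.
  by rewrite -mulr_suml h0 mul1r.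
apply: eq_bigr => u _; rewrite -(E1_const _ u.2 g) mulr_sumr.
by apply: eq_bigr => v _; rewrite mulrA.
Qed.

Lemma Ep2 d1 d : \sum_(u <- d) u.1 = 1 -> good d1 ->
  Epayoff2 a b c theta d1 d = 1/2 - b * theta / a.
Proof.
move=> h0 g; rewrite /Epayoff2 exchange_big /=.
transitivity (\sum_(u <- d) u.1 * (1/2 - b * theta / a)); last first.
  by rewrite -mulr_suml h0 mul1r.
apply: eq_bigr => u _; rewrite -(E1_const _ u.2 g) mulr_sumr.
apply: eq_bigr => v _; rewrite /payoff1 /payoff2 /Pcsf; by field.
Qed.

Lemma good_NE d : is_dist_nonneg d -> good d ->
  [/\ mixed_NE a b c theta d d, mean d = b / a &
      variance d = (c - theta) / a - (b / a) ^+ 2].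
Proof.
move=> hd g; have g' := g; move: g' => [h0 [h1 h2]].
have hm : mean d = b / a by rewrite /mean /expect.
split => //.
- split; first done; split; first done; split.
  + by move=> d' [_ s]; rewrite !Ep1 //; case: hd.
  + by move=> d' [_ s]; rewrite !Ep2 //; case: hd.
- rewrite /variance /expect hm.
  rewrite (@sum_quad R d (fun x => (x - b/a)^+2) ((b/a)^+2) (-(2 * (b/a))) 1); last by move=> y; ring.
  rewrite h0 h1 h2; ring.
Qed.
End G.
Arguments good {R}.

Theorem proposition2 (R : realType) (a b c theta : R) :
  0 < a -> 0 < b -> 0 < c -> 0 < theta -> zeta a b c theta < 0 ->
  (a <= 2 * b ^+ 2 / (c - theta) ->
     is_dist_nonneg (D_sym a b c theta) /\
     mean (D_sym a b c theta) = kappa a b /\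
     variance (D_sym a b c theta) = - zeta a b c theta /\
     mixed_NE a b c theta (D_sym a b c theta) (D_sym a b c theta)) /\
  (2 * b ^+ 2 / (c - theta) <= a ->
     0 < pw a b c theta < 1 /\
     is_dist_nonneg (D_atom a b c theta) /\
     mean (D_atom a b c theta) = kappa a b /\
     variance (D_atom a b c theta) = - zeta a b c theta /\
     mixed_NE a b c theta (D_atom a b c theta) (D_atom a b c theta)) /\
  (a = 2 * b ^+ 2 / (c - theta) ->
     same_dist (D_sym a b c theta) (D_atom a b c theta)).
Proof.
move=> ha hb hc ht hz.
have a0 : a != 0 by rewrite gt_eqF.
have hz' : b ^+ 2 < a * (c - theta).
  move: hz; rewrite /zeta pmulr_llt0 ?invr_gt0 ?exprn_gt0 //; lra.
have hct : 0 < c - theta.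
  have hb2 : 0 < b ^+ 2 by rewrite exprn_gt0.
  rewrite -(pmulr_rgt0 _ ha); lra.
have ct0 : c - theta != 0 by rewrite gt_eqF.
have b0 : b != 0 by rewrite gt_eqF.
have hvar : (c - theta) / a - (b / a) ^+ 2 = - zeta a b c theta.
  by rewrite /zeta; field.
have nz : 0 <= - zeta a b c theta by lra.
have ss : sdev a b c theta ^+ 2 = - zeta a b c theta by rewrite sqr_sqrtr.
split; [|split].
- move=> hle.
  have gs : good a b c theta (D_sym a b c theta).
    rewrite /good /D_sym !big_cons !big_nil /=; split; first by field.
    split; first by rewrite /kappa; field.
    rewrite -hvar in ss.
    rewrite /kappa; set s := sdev a b c theta.
    have -> : 1 / 2 * (b / a - s) ^+ 2 + (1 / 2 * (b / a + s) ^+ 2 + 0)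
              = (b/a)^+2 + s ^+ 2 by field.
    rewrite ss; ring.
  have ds : is_dist_nonneg (D_sym a b c theta).
    split; last by case: gs.
    move=> u; rewrite !inE => /orP [] /eqP -> /=; (split; first lra).
    + have kp : 0 <= b / a by rewrite divr_ge0 // ltW.
      rewrite subr_ge0 /kappa /sdev -[X in _ <= X](ger0_norm kp) -sqrtr_sqr.
      rewrite ler_sqrt ?sqr_ge0 //.
      have h : a * (c - theta) <= 2 * b ^+ 2.
        by rewrite -ler_pdivlMr // mulrC.
      rewrite -hvar -subr_ge0.
      have -> : (b/a)^+2 - ((c-theta)/a - (b/a)^+2) = (2*b^+2 - a*(c-theta)) / a^+2.
        by field.
      by apply: divr_ge0; [rewrite subr_ge0 | rewrite exprn_ge0 // ltW].
    + rewrite addr_ge0 // ?sqrtr_ge0 // /kappa divr_ge0 // ltW //.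
  case: (@good_NE R a b c theta a0 _ ds gs) => h1 h2 h3.
  by rewrite h2 h3 hvar.
- move=> hle.
  have p0 : 0 < pw a b c theta.
    by rewrite /pw divr_gt0 ?exprn_gt0 ?mulr_gt0.
  have p1 : pw a b c theta < 1.
    by rewrite /pw ltr_pdivrMr ?mulr_gt0 // mul1r.
  have gs : good a b c theta (D_atom a b c theta).
    rewrite /good /D_atom !big_cons !big_nil /= /pw /zpt; split; first by ring.
    split; field; rewrite ?a0 ?b0 ?ct0 //.
  have ds : is_dist_nonneg (D_atom a b c theta).
    split; last by case: gs.
    move=> u; rewrite !inE => /orP [] /eqP -> /=; split => //; try lra.
    by rewrite /zpt divr_ge0 // ltW.
  case: (@good_NE R a b c theta a0 _ ds gs) => h1 h2 h3.
  by rewrite p0 p1 h2 h3 hvar.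
- move=> ea f.
  have hac : a * (c - theta) = 2 * b ^+ 2 by rewrite ea; field.
  have hct' : c - theta = 2 * b ^+ 2 / a by rewrite -hac; field.
  have kp : 0 <= b / a by rewrite divr_ge0 // ltW.
  have hk : sdev a b c theta = kappa a b.
    rewrite /sdev /kappa (_ : - zeta a b c theta = (b / a) ^+ 2).
      by rewrite sqrtr_sqr ger0_norm.
    by rewrite /zeta hac; field; rewrite ?a0 ?b0.
  have hp : pw a b c theta = 1/2 by rewrite /pw hac; field; rewrite ?a0 ?b0.
  have hzp : zpt b c theta = 2 * kappa a b.
    by rewrite /zpt /kappa hct'; field; rewrite a0 b0.
  rewrite /expect /D_sym /D_atom.
  rewrite !big_cons !big_nil hk hp hzp subrr.
  have -> : kappa a b + kappa a b = 2 * kappa a b by ring.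
  have -> : 1 - 1 / 2 = 1 / 2 :> R by field.
  done.
Qed.
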